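(* Let $(M,\mathcal{T})$ be a closed pseudo $3$-manifold with $v(e)\ge9$ for each $e\in E$. Let $\{l(t):t\in[0,\infty)\}\subset\mathbb{R}^E_{>0}$ be the solution of the extended Ricci flow with initial data $l^0\in\mathbb{R}^E_{>0}$ satisfying $l^0_e\in(0,\operatorname{arccosh}b_{v(e)})$ for all $e\in E$. If there exists $t_0>0$ such that $\sup\{l_e(t):0\le t\le t_0,\ e\in E\}\le\operatorname{arccosh}2$, then for each $e\in E$, $l_e(t)\in(0,\operatorname{arccosh}b_{v(e)}]$ for all $t\in[0,t_0]$.
   Context: A closed pseudo $3$-manifold $(M,\mathcal{T})$: a finite disjoint union $\widehat{\mathcal{T}}$ of tetrahedra with faces glued in pairs by affine homeomorphisms; $\mathcal{T}$ is the quotient complex, $E$ its edge set, $P_E$ the quotient map on edges, $v(e)=|P_E^{-1}(e)|$ the valence. For $l\in\mathbb{R}^E_{>0}$, each edge $\hat e$ of $\widehat{\mathcal{T}}$ gets length $l_{P_E(\hat e)}$; in a tetrahedron with vertices $i,j,k,h$ let $x_{ab}=\cosh$(length of $ab$) and $$\phi_{ij}=\frac{x_{ik}x_{ih}+x_{jk}x_{jh}+x_{ij}x_{ik}x_{jh}+x_{ij}x_{ih}x_{jk}-x_{ij}^2x_{kh}+x_{kh}}{\sqrt{2x_{ij}x_{ik}x_{jk}+x_{ij}^2+x_{ik}^2+x_{jk}^2-1}\sqrt{2x_{ij}x_{ih}x_{jh}+x_{ij}^2+x_{ih}^2+x_{jh}^2-1}},$$ dihedral angle $\alpha_{ij}=\arccos(\max\{-1,\min\{\phi_{ij},1\}\})$.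 $\widetilde K_e(l)=2\pi-\sum_{\hat e\in P_E^{-1}(e)}\alpha(\hat e)$. Extended Ricci flow: $\frac{d}{dt}l_e=\widetilde K_e(l)l_e$, $l(0)=l^0$ (unique solution for all $t\ge0$). Constants: $b_9=2$, $b_n=\frac{16}{1+\cos(2\pi/n)}-7$ for $n\ge10$. *)

(* Defs.v *)
From mathcomp Require Import all_boot fingroup perm.
From Stdlib Require Import Reals.
Set Implicit Arguments.
Unset Strict Implicit.
Unset Printing Implicit Defensive.

(* A face of tetrahedron t is named (t,k), k the opposite vertex.
   [glue f] is the face glued to f, [gmap f] the vertex bijection of the
   affine gluing (as a permutation of 'I_4, from the vertices of tet f.1 to
   those of tet (glue f).1).  An edge of a tetrahedron is (t, A) with
   A : {set 'I_4} of cardinality 2; [PE] is the quotient map onto the edge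
   set [edg] of the quotient complex. *)
Record triangulation := Triangulation {
  tet : finType;
  edg : finType;
  glue : tet * 'I_4 -> tet * 'I_4;
  gmap : tet * 'I_4 -> {perm 'I_4};
  PE : tet -> {set 'I_4} -> edg
}.

Definition is_hedge (T : triangulation) (x : tet T * {set 'I_4}) : bool :=
  #|x.2| == 2.

Definition glued_edges (T : triangulation) (x y : tet T * {set 'I_4}) : bool :=
  [exists k : 'I_4, [&& k \notin x.2,
                         (@glue T (x.1, k)).1 == y.1 &
                         y.2 == @gmap T (x.1, k) @: x.2]].

Definition closed_pseudo3 (T : triangulation) : Prop :=
  [/\ (forall f, @glue T (@glue T f) = f) /\ (forall f, @glue T f <> f),
      (forall f, @gmap T f f.2 = (@glue T f).2),
      (forall f, @gmap T (@glue T f) = (@gmap T f)^-1%g),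
      (forall x y, is_hedge x -> is_hedge y ->
          (@PE T x.1 x.2 = @PE T y.1 y.2 <-> connect (@glued_edges T) x y)) &
      (forall e : edg T, exists x, is_hedge x /\ @PE T x.1 x.2 = e)].

Definition valence (T : triangulation) (e : edg T) : nat :=
  #|[set x : tet T * {set 'I_4} | is_hedge x && (@PE T x.1 x.2 == e)]|.

Open Scope R_scope.

Definition arccosh (x : R) : R := ln (x + sqrt (x ^ 2 - 1)).

Definition bconst (n : nat) : R :=
  if Nat.eqb n 9 then 2 else 16 / (1 + cos (2 * PI / INR n)) - 7.

(* the formula phi_ij in terms of x_ab = cosh(length ab) *)
Definition phi_formula (xij xik xih xjk xjh xkh : R) : R :=
  (xik * xih + xjk * xjh + xij * xik * xjh + xij * xih * xjk
     - xij ^ 2 * xkh + xkh)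
  / (sqrt (2 * xij * xik * xjk + xij ^ 2 + xik ^ 2 + xjk ^ 2 - 1)
     * sqrt (2 * xij * xih * xjh + xij ^ 2 + xih ^ 2 + xjh ^ 2 - 1)).

(* dihedral angle at the edge x = (t, {i,j}) of tetrahedron t, with
   {k,h} the complementary vertices (the formula is symmetric in i<->j and
   in k<->h, so the enumeration order is irrelevant). *)
Definition dihedral (T : triangulation) (l : edg T -> R)
    (x : tet T * {set 'I_4}) : R :=
  let t := x.1 in
  let A := x.2 in
  let i := nth ord0 (enum A) 0 in
  let j := nth ord0 (enum A) 1 in
  let k := nth ord0 (enum (~: A)) 0 in
  let h := nth ord0 (enum (~: A)) 1 in
  let c a b := cosh (l (@PE T t [set a; b])) in
  acos (Rmax (-1) (Rmin (phi_formula (c i j) (c i k) (c i h) (c j k) (c j h) (c k h)) 1)).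

Definition curv (T : triangulation) (l : edg T -> R) (e : edg T) : R :=
  2 * PI - \big[Rplus/0]_(x : tet T * {set 'I_4} | is_hedge x && (@PE T x.1 x.2 == e))
              dihedral l x.

Definition right_deriv (f : R -> R) (t d : R) : Prop :=
  forall eps, 0 < eps -> exists delta, 0 < delta /\
    forall h, 0 < h < delta -> Rabs ((f (t + h) - f t) / h - d) < eps.

Definition ext_ricci_flow_solution (T : triangulation) (l0 : edg T -> R)
    (l : R -> edg T -> R) : Prop :=
  [/\ (forall e, l 0 e = l0 e),
      (forall t e, 0 <= t -> 0 < l t e),
      (forall t e, 0 < t -> derivable_pt_lim (fun s => l s e) t (curv (l t) e * l t e)) &
      (forall e, right_deriv (fun s => l s e) 0 (curv (l 0) e * l 0 e))].

(* Main.v *)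
Require Import Defs.
From mathcomp Require Import all_boot fingroup perm.
From Stdlib Require Import Reals Lra Psatz Classical.
Open Scope R_scope.

Lemma step_gen (p q m n a a' : R) :
  a <= a' -> 0 <= p*a+q -> 0 <= p*a'+q ->
  0 <= a*(p*m-q) + (p*n-q*m) -> 0 <= a'*(p*m-q) + (p*n-q*m) ->
  0 < a*a+2*m*a+n -> 0 < a'*a'+2*m*a'+n ->
  (p*a+q)^2/(a*a+2*m*a+n) <= (p*a'+q)^2/(a'*a'+2*m*a'+n).
Proof.
  intros Ha HL HL' HE HE' HD HD'.
  apply Rmult_le_reg_r with ((a*a+2*m*a+n)*(a'*a'+2*m*a'+n)).
  { apply Rmult_lt_0_compat; lra. }
  replace ((p*a+q)^2/(a*a+2*m*a+n) * ((a*a+2*m*a+n)*(a'*a'+2*m*a'+n)))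
    with ((p*a+q)^2*(a'*a'+2*m*a'+n)) by (field; lra).
  replace ((p*a'+q)^2/(a'*a'+2*m*a'+n) * ((a*a+2*m*a+n)*(a'*a'+2*m*a'+n)))
    with ((p*a'+q)^2*(a*a+2*m*a+n)) by (field; lra).
  assert (Hid : (p*a'+q)^2*(a*a+2*m*a+n) - (p*a+q)^2*(a'*a'+2*m*a'+n)
     = (a'-a)*((a*(p*m-q) + (p*n-q*m))*(p*a'+q) + (a'*(p*m-q) + (p*n-q*m))*(p*a+q))) by ring.
  assert (0 <= (a'-a)*((a*(p*m-q) + (p*n-q*m))*(p*a'+q) + (a'*(p*m-q) + (p*n-q*m))*(p*a+q))).
  { apply Rmult_le_pos; [lra|]. apply Rplus_le_le_0_compat; apply Rmult_le_pos; lra. }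
  lra.
Qed.

Definition N1 x a b c d := a*b+c*d+x*(a*d+b*c) - (x*x-1).
Definition D1 x a c := a*a+c*c+2*x*a*c + (x*x-1).


Lemma N1_pos (x a b c d : R) : 1 <= x <= 2 -> 1 <= a <= 2 -> 1 <= b <= 2 -> 1 <= c <= 2 -> 1 <= d <= 2 -> 0 < N1 x a b c d.
Proof. intros Hx Ha Hb Hc Hd. unfold N1.
  assert (1 <= a*b) by nra. assert (1 <= c*d) by nra.
  assert (2 <= a*d+b*c) by nra. nra. Qed.

Lemma D1_pos0 (x a b c d : R) : 1 <= x <= 2 -> 1 <= a <= 2 -> 1 <= b <= 2 -> 1 <= c <= 2 -> 1 <= d <= 2 -> 0 < D1 x a c.
Proof. intros Hx Ha Hb Hc Hd. unfold D1.
  assert (1 <= a*c) by nra. assert (0 <= x*(a*c)) by nra. nra. Qed.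

Lemma Ea_pos (x a b c d : R) : 1 <= x <= 2 -> 1 <= a <= 2 -> 1 <= b <= 2 -> 1 <= c <= 2 -> 1 <= d <= 2 -> 0 <= a*c*d - b*c*c + a + b + x*(c+d).
Proof. intros Hx Ha Hb Hc Hd.
  assert (c <= a*c*d) by (assert (1 <= a*d) by nra; nra).
  assert (c <= x*c) by nra. assert (1 <= x*d) by nra.
  assert (b*(c-1) <= 2) by nra.
  assert (0 <= (1+c)*(2-b*(c-1))) by nra. nra. Qed.
Lemma D1_pos x a c : 1 <= x <= 2 -> 1 <= a <= 2 -> 1 <= c <= 2 -> 0 < D1 x a c.
Proof. intros; apply (D1_pos0 x a 1 c 1); lra. Qed.

Lemma stepA x a b c d : 1 <= x <= 2 -> 1 <= a <= 2 -> 1 <= b <= 2 -> 1 <= c <= 2 -> 1 <= d <= 2 ->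
  (N1 x a b c d)^2 / D1 x a c <= (N1 x 2 b c d)^2 / D1 x 2 c.
Proof.
  intros Hx Ha Hb Hc Hd.
  assert (E1 : forall t, N1 x t b c d = (b+x*d)*t + (c*(d+x*b) - (x*x-1))) by (intro; unfold N1; ring).
  assert (E2 : forall t, D1 x t c = t*t + 2*(x*c)*t + (c*c+(x*x-1))) by (intro; unfold D1; ring).
  rewrite !E1 !E2.
  assert (HE : forall t, 1 <= t <= 2 -> 0 <= t*((b+x*d)*(x*c) - (c*(d+x*b) - (x*x-1))) + ((b+x*d)*(c*c+(x*x-1)) - (c*(d+x*b) - (x*x-1))*(x*c))).
  { intros t Ht.
    replace (t*((b+x*d)*(x*c) - (c*(d+x*b) - (x*x-1))) + ((b+x*d)*(c*c+(x*x-1)) - (c*(d+x*b) - (x*x-1))*(x*c)))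
      with ((x*x-1)*(t*c*d - b*c*c + t + b + x*(c+d))) by ring.
    apply Rmult_le_pos; [nra|]. apply (Ea_pos x t b c d); lra. }
  apply step_gen.
  - lra.
  - rewrite -E1. left; apply N1_pos; lra.
  - rewrite -E1. left; apply N1_pos; lra.
  - apply HE; lra.
  - apply HE; lra.
  - rewrite -E2. apply D1_pos; lra.
  - rewrite -E2. apply D1_pos; lra.
Qed.

Lemma N1_swap1 x a b c d : N1 x a b c d = N1 x c d a b.
Proof. unfold N1; ring. Qed.
Lemma N1_swap2 x a b c d : N1 x a b c d = N1 x b a d c.
Proof. unfold N1; ring. Qed.
Lemma D1_swap x a c : D1 x a c = D1 x c a.
Proof. unfold D1; ring. Qed.

Lemma ratio_bound x a b c d : 1 <= x <= 2 -> 1 <= a <= 2 -> 1 <= b <= 2 -> 1 <= c <= 2 -> 1 <= d <= 2 ->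
  (N1 x a b c d)^2 / (D1 x a c * D1 x b d) <= ((9-x)/(x+7))^2.
Proof.
  intros Hx Ha Hb Hc Hd.
  assert (Hp : forall u v, 1 <= u <= 2 -> 1 <= v <= 2 -> 0 < D1 x u v) by (intros; apply D1_pos; lra).
  assert (S1 : (N1 x a b c d)^2 / D1 x a c <= (N1 x 2 b 2 d)^2 / D1 x 2 2).
  { eapply Rle_trans. apply stepA; lra.
    rewrite (N1_swap1 x 2 b c d) (D1_swap x 2 c) (N1_swap1 x 2 b 2 d).
    apply (stepA x c d 2 b); lra. }
  assert (S2 : (N1 x 2 b 2 d)^2 / D1 x b d <= (N1 x 2 2 2 2)^2 / D1 x 2 2).
  { rewrite (N1_swap2 x 2 b 2 d).
    eapply Rle_trans. apply (stepA x b 2 d 2); lra.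
    rewrite (D1_swap x 2 d) (N1_swap1 x 2 2 d 2).
    apply (stepA x d 2 2 2); lra. }
  assert (Z1 : D1 x a c <> 0) by (apply Rgt_not_eq, Hp; lra).
  assert (Z2 : D1 x b d <> 0) by (apply Rgt_not_eq, Hp; lra).
  assert (Z3 : D1 x 2 2 <> 0) by (apply Rgt_not_eq, Hp; lra).
  replace ((N1 x a b c d)^2 / (D1 x a c * D1 x b d)) with ((N1 x a b c d)^2 / D1 x a c / D1 x b d)
    by (field; auto).
  eapply Rle_trans.
  { apply Rmult_le_compat_r. left; apply Rinv_0_lt_compat, Hp; lra. exact S1. }
  replace ((N1 x 2 b 2 d)^2 / D1 x 2 2 * / D1 x b d) with ((N1 x 2 b 2 d)^2 / D1 x b d / D1 x 2 2)
    by (field; auto).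
  eapply Rle_trans.
  { apply Rmult_le_compat_r. left; apply Rinv_0_lt_compat, Hp; lra. exact S2. }
  unfold D1 in Z3. unfold N1, D1. right. field. split; [lra|]. intro HH; apply Z3; rewrite -HH; ring.
Qed.


Lemma phi_bound x a b c d f : 1 <= x <= 2 -> 1 <= a <= 2 -> 1 <= b <= 2 -> 1 <= c <= 2 -> 1 <= d <= 2 -> 1 <= f <= 2 ->
  phi_formula x a b c d f <= (9-x)/(x+7).
Proof.
  intros Hx Ha Hb Hc Hd Hf.
  unfold phi_formula.
  replace (2 * x * a * c + x ^ 2 + a ^ 2 + c ^ 2 - 1) with (D1 x a c) by (unfold D1; ring).
  replace (2 * x * b * d + x ^ 2 + b ^ 2 + d ^ 2 - 1) with (D1 x b d) by (unfold D1; ring).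
  assert (P1 := D1_pos x a c Hx Ha Hc).
  assert (P2 := D1_pos x b d Hx Hb Hd).
  assert (HN := N1_pos x a b c d Hx Ha Hb Hc Hd).
  assert (HR := ratio_bound x a b c d Hx Ha Hb Hc Hd).
  set (S := sqrt (D1 x a c) * sqrt (D1 x b d)).
  assert (HS : 0 < S) by (apply Rmult_lt_0_compat; apply sqrt_lt_R0; lra).
  assert (Hnum : a * b + c * d + x * a * d + x * b * c - x ^ 2 * f + f <= N1 x a b c d).
  { unfold N1. assert (0 <= (x*x-1)*(f-1)) by (apply Rmult_le_pos; nra). nra. }
  set (r := (9-x)/(x+7)).
  assert (Hr : 0 <= r) by (unfold r; apply Rmult_le_pos; [lra| left; apply Rinv_0_lt_compat; lra]).
  assert (Hmain : N1 x a b c d <= r * S).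
  { assert (HH : N1 x a b c d ^ 2 <= r^2 * (D1 x a c * D1 x b d)).
    { apply Rmult_le_reg_r with (/ (D1 x a c * D1 x b d)).
      { apply Rinv_0_lt_compat, Rmult_lt_0_compat; lra. }
      replace (r ^ 2 * (D1 x a c * D1 x b d) * / (D1 x a c * D1 x b d)) with (r^2)
        by (field; split; lra).
      exact HR. }
    rewrite -(sqrt_pow2 (N1 x a b c d)); [|lra].
    rewrite -(sqrt_pow2 r); [|lra].
    unfold S. rewrite -sqrt_mult; try lra.
    rewrite -sqrt_mult; try nra.
    apply sqrt_le_1_alt. exact HH. }
  apply Rmult_le_reg_r with S; [exact HS|].
  replace ((a * b + c * d + x * a * d + x * b * c - x ^ 2 * f + f) / S * S)
    with (a * b + c * d + x * a * d + x * b * c - x ^ 2 * f + f) by (field; lra).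
  lra.
Qed.


Lemma two_elems (A : {set 'I_4}) : #|A| = 2%nat ->
  A = [set nth ord0 (enum A) 0%nat; nth ord0 (enum A) 1%nat].
Proof.
  rewrite cardE. case E: (enum A) => [|i [|j [|k s]]] //= _.
  apply/setP => y. by rewrite !inE -mem_enum E !inE.
Qed.

Lemma sum_gt (I : finType) (P : pred I) (F : I -> R) (c : R) :
  (forall i, P i -> c < F i) -> (0 < #|P|)%nat ->
  INR #|P| * c < \big[Rplus/0]_(i | P i) F i.
Proof.
  move=> HF Hn.
  have : (INR (\sum_(i | P i) 1%nat) * c <= \big[Rplus/0]_(i | P i) F i) /\
         ((0 < \sum_(i | P i) 1)%nat -> INR (\sum_(i | P i) 1%nat) * c < \big[Rplus/0]_(i | P i) F i).
  { apply: (big_rec2 (fun n r => (INR n * c <= r) /\ ((0 < n)%nat -> INR n * c < r))).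
    - split; [simpl; lra| by []].
    - move=> i n r Pi [H1 H2].
      have Hi := HF i Pi.
      have E : INR (1 + n) = 1 + INR n by rewrite plus_INR.
      rewrite E; split; [lra| move=> _; lra]. }
  rewrite sum1_card. by case=> _ H; apply: H.
Qed.


Lemma cosh_incr u v : 0 <= u -> u < v -> cosh u < cosh v.
Proof.
  move=> Hu Huv. rewrite /cosh.
  have E1 : exp u < exp v by apply exp_increasing.
  have E0 : 0 < exp u by apply exp_pos.
  have E2 : 1 < exp u * exp v.
  { rewrite -exp_plus. rewrite -exp_0. apply exp_increasing. lra. }
  rewrite !exp_Ropp.
  have Hv : 0 < exp v by apply exp_pos.
  apply Rmult_lt_compat_r; [lra|].
  have : / exp u - / exp v = (exp v - exp u) / (exp u * exp v) by field; lra.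
  have : (exp v - exp u) / (exp u * exp v) < exp v - exp u.
  { apply Rmult_lt_reg_r with (exp u * exp v); [nra|].
    rewrite /Rdiv Rmult_assoc Rinv_l; [|nra]. nra. }
  lra.
Qed.

Lemma cosh_le u v : 0 <= u -> u <= v -> cosh u <= cosh v.
Proof. move=> Hu [H|->]; [left; apply cosh_incr|right]; lra. Qed.

Lemma cosh_ge1 u : 0 <= u -> 1 <= cosh u.
Proof. move=> Hu. rewrite -cosh_0. apply cosh_le; lra. Qed.

Lemma arccosh_prop y : 1 <= y -> 0 <= arccosh y /\ cosh (arccosh y) = y.
Proof.
  move=> Hy. rewrite /arccosh.
  have Hs : 0 <= sqrt (y ^ 2 - 1) by apply sqrt_pos.
  have Hss : sqrt (y ^ 2 - 1) * sqrt (y ^ 2 - 1) = y ^ 2 - 1 by apply sqrt_sqrt; nra.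
  have Hw : 1 <= y + sqrt (y ^ 2 - 1) by lra.
  split.
  - rewrite -ln_1. case: Hw => Hw; [left; apply ln_increasing; lra| rewrite -Hw; right; reflexivity].
  - rewrite /cosh exp_Ropp exp_ln; [|lra].
    have Hi : / (y + sqrt (y ^ 2 - 1)) = y - sqrt (y ^ 2 - 1).
    { apply Rmult_eq_reg_l with (y + sqrt (y ^ 2 - 1)); [|lra].
      rewrite Rinv_r; [|lra]. nra. }
    rewrite Hi. lra.
Qed.


Lemma dihedral_gt (T : triangulation) (l : edg T -> R) x e b cc :
  is_hedge x -> @PE T x.1 x.2 = e -> (forall e', 1 <= cosh (l e') <= 2) ->
  b < cosh (l e) -> -7 < b -> cc = (9-b)/(b+7) -> -1 < cc -> cc <= 1 ->
  acos cc < dihedral l x.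
Proof.
  move=> Hh HPE Hc Hb Hb7 Hcc Hc1 Hc2.
  rewrite /dihedral /=.
  have Hx2 : x.2 = [set nth ord0 (enum x.2) 0%nat; nth ord0 (enum x.2) 1%nat].
  { apply two_elems. by apply/eqP. }
  rewrite -Hx2 HPE.
  have HX := Hc e.
  set X := cosh (l e) in HX Hb *.
  set ph := phi_formula X _ _ _ _ _.
  have Hph : ph <= (9-X)/(X+7).
  { apply phi_bound; first [exact HX | apply Hc]. }
  clearbody ph X.
  have HX2 : X <= 2 by lra.
  have Hlt : ph < cc.
  { rewrite Hcc. apply (Rle_lt_trans _ _ _ Hph).
    apply Rmult_lt_reg_r with ((X+7)*(b+7)); [nra|].
    have -> : (9 - X) / (X + 7) * ((X + 7) * (b + 7)) = (9-X)*(b+7) by field; lra.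
    have -> : (9 - b) / (b + 7) * ((X + 7) * (b + 7)) = (9-b)*(X+7) by field; lra.
    nra. }
  set cl := Rmax (-1) (Rmin ph 1).
  have Hcl1 : cl < cc.
  { apply Rmax_lub_lt; [lra|]. apply (Rle_lt_trans _ ph); [apply Rmin_l|lra]. }
  have Hcl2 : -1 <= cl <= 1.
  { split; [apply Rmax_l|]. apply Rmax_lub; [lra|apply Rmin_r]. }
  move: (acos_bound cl) (acos_bound cc) => B1 B2.
  apply cos_decreasing_0; try lra.
  rewrite !cos_acos; lra.
Qed.


Lemma quot_lip (u h d : R) : h <> 0 -> Rabs (u / h - d) < 1 -> Rabs u <= Rabs h * (Rabs d + 1).
Proof.
  move=> Hh Hq.
  have E : u = h * (u / h) by field.
  rewrite {1}E Rabs_mult.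
  apply Rmult_le_compat_l; [apply Rabs_pos|].
  have := Rabs_triang (u/h - d) d.
  have -> : u / h - d + d = u / h by ring.
  lra.
Qed.

Lemma rd_lip f s d : right_deriv f s d ->
  exists del, 0 < del /\ forall h, 0 < h < del -> Rabs (f (s+h) - f s) <= h * (Rabs d + 1).
Proof.
  move=> H. have [del [Hd Hh]] := H 1 Rlt_0_1.
  exists del; split => // h Hh'.
  have := quot_lip (f (s+h) - f s) h d ltac:(lra) (Hh h Hh').
  rewrite (Rabs_pos_eq h); lra.
Qed.

Lemma dpl_rd f s d : derivable_pt_lim f s d -> right_deriv f s d.
Proof.
  move=> H eps Heps. have [del Hd] := H eps Heps.
  exists del; split; [apply cond_pos|] => h Hh.
  apply Hd; [lra|]. rewrite Rabs_pos_eq; lra.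
Qed.

Lemma dpl_left f s d : derivable_pt_lim f s d ->
  exists del, 0 < del /\ forall h, 0 < h < del -> Rabs (f (s-h) - f s) <= h * (Rabs d + 1).
Proof.
  move=> H. have [del Hd] := H 1 Rlt_0_1.
  exists del; split; [apply cond_pos|] => h Hh.
  have Hn : -h <> 0 by apply Rlt_not_eq; lra.
  have Ha : Rabs (-h) < del by rewrite Rabs_Ropp Rabs_pos_eq; lra.
  have Hq := Hd (-h) Hn Ha.
  have := quot_lip _ _ _ Hn Hq.
  rewrite Rabs_Ropp (Rabs_pos_eq h); [|lra].
  by rewrite /Rminus.
Qed.


Lemma curv_neg (T : triangulation) (l : edg T -> R) (e : edg T) (b : R) (n : nat) :
  valence e = n -> (10 <= n)%nat ->
  b = 16 / (1 + cos (2 * PI / INR n)) - 7 ->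
  (forall e', 0 < l e' <= arccosh 2) ->
  arccosh b < l e -> curv l e < 0.
Proof.
  move=> Hn Hn10 Hb Hl Hgt.
  have HnR : 10 <= INR n by (have := le_INR 10 n; simpl; move/leP: Hn10 => H; move=> /(_ H); lra).
  have HPI := PI_RGT_0.
  set th := 2 * PI / INR n.
  have Hth : 0 < th < PI.
  { rewrite /th; split.
    - apply Rdiv_lt_0_compat; lra.
    - apply Rmult_lt_reg_r with (INR n); [lra|].
      rewrite /Rdiv Rmult_assoc Rinv_l; [|lra]. nra. }
  set cc := cos th.
  have Hcc1 : -1 < cc.
  { rewrite /cc -cos_PI. apply cos_decreasing_1; lra. }
  have Hcc2 : cc <= 1 by rewrite /cc; have := COS_bound th; lra.
  fold th cc in Hb.
  have Hb1 : 1 <= b.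
  { rewrite Hb. apply (Rplus_le_reg_r 7).
    have -> : 16 / (1 + cc) - 7 + 7 = 16 / (1+cc) by ring.
    apply Rmult_le_reg_r with (1+cc); [lra|].
    rewrite /Rdiv Rmult_assoc Rinv_l; [|lra]. lra. }
  have Hccb : cc = (9 - b) / (b + 7).
  { rewrite Hb. field. split; lra. }
  have [HB0 HB] := arccosh_prop b Hb1.
  have Hch : b < cosh (l e) by rewrite -HB; apply cosh_incr; lra.
  have [_ H2] := arccosh_prop 2 ltac:(lra).
  have Hc : forall e', 1 <= cosh (l e') <= 2.
  { move=> e'. have := Hl e' => He'. split; [apply cosh_ge1; lra|].
    apply (Rle_trans _ (cosh (arccosh 2))); [apply cosh_le; lra| lra]. }
  have Hdih : forall x, is_hedge x && (@PE T x.1 x.2 == e) -> th < dihedral l x.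
  { move=> x /andP [Hh /eqP HP].
    have := @dihedral_gt T l x e b cc Hh HP Hc Hch ltac:(lra) Hccb Hcc1 Hcc2.
    rewrite /cc acos_cos; lra. }
  have Hcard : #|(fun x : tet T * {set 'I_4} => is_hedge x && (@PE T x.1 x.2 == e))| = n.
  { rewrite -Hn /valence. apply: eq_card => x. by rewrite inE. }
  have Hsum := @sum_gt _ _ _ _ Hdih ltac:(rewrite Hcard; apply/ltP; move/leP: Hn10; lia).
  rewrite Hcard in Hsum.
  have Eth : INR n * th = 2 * PI by rewrite /th; field; lra.
  rewrite Eth in Hsum.
  rewrite /curv. by apply Rlt_minus.
Qed.


Theorem proposition3p5 (T : triangulation) (l0 : edg T -> R)
    (l : R -> edg T -> R) :
  closed_pseudo3 T ->
  (forall e : edg T, (9 <= valence e)%nat) ->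
  (forall e : edg T, 0 < l0 e < arccosh (bconst (valence e))) ->
  ext_ricci_flow_solution l0 l ->
  forall t0, 0 < t0 ->
  (forall t e, 0 <= t <= t0 -> l t e <= arccosh 2) ->
  forall e t, 0 <= t <= t0 -> 0 < l t e <= arccosh (bconst (valence e)).
Proof.
  move=> _ Hval Hl0 [Hinit Hpos Hder Hrd] t0 Ht0 Hbd e t Ht.
  split; first by apply Hpos; lra.
  rewrite /bconst. case E9: (Nat.eqb (valence e) 9); first by apply Hbd.
  have Hn10 : (10 <= valence e)%nat.
  { have := Hval e. move/Nat.eqb_neq: E9 => E9 H9.
    apply/leP. move/leP: H9 => H9. lia. }
  set b := 16 / (1 + cos (2 * PI / INR (valence e))) - 7.
  have Hl0e : 0 < l0 e < arccosh b by have := Hl0 e; rewrite /bconst E9.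
  set B := arccosh b in Hl0e *.
  have Hneg : forall s, 0 <= s <= t0 -> B < l s e -> curv (l s) e < 0.
  { move=> s Hs HB. apply: (@curv_neg T (l s) e b (valence e)) => //.
    move=> e'. split; [apply Hpos; lra| apply Hbd; lra]. }
  apply Rnot_lt_le => Hgt.
  have Hg0 : l 0 e < B by rewrite Hinit; lra.
  have Ht0' : 0 < t.
  { case: (Rle_lt_or_eq_dec 0 t (proj1 Ht)) => // Heq. rewrite -Heq in Hgt. lra. }
  set g := fun s => l s e.
  set E := fun s => 0 <= s <= t /\ l s e <= B.
  have Hbound : bound E by exists t => u [Hu _]; lra.
  have Hex : exists u, E u by exists 0; split; [lra|lra].
  have [m [Hub Hlub]] := completeness E Hbound Hex.
  have Hm0 : 0 <= m by apply Hub; split; [lra|lra].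
  have Hmt : m <= t by apply Hlub => u [Hu _]; lra.
  have HmB : l m e <= B.
  { apply Rnot_lt_le => Hc.
    case: (Rle_lt_or_eq_dec 0 m Hm0) => Hm0'; last first.
    { rewrite -Hm0' in Hc. lra. }
    have [del [Hdel Hlip]] := @dpl_left _ _ _ (Hder m e Hm0').
    set K := Rabs (curv (l m) e * l m e) + 1.
    have HK : 0 < K by rewrite /K; have := Rabs_pos (curv (l m) e * l m e); lra.
    set eta := Rmin (del / 2) ((l m e - B) / (2 * K)).
    have Heta : 0 < eta.
    { apply Rmin_glb_lt; [lra|]. apply Rdiv_lt_0_compat; lra. }
    have Hmin1 : eta <= del / 2 by apply Rmin_l.
    have Heta1 : eta < del by lra.
    have Heta2 : eta * K < l m e - B.
    { have Hr : eta <= (l m e - B) / (2 * K) by apply Rmin_r.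
      have : (l m e - B) / (2 * K) * K = (l m e - B) / 2 by field; lra.
      have : eta * K <= (l m e - B) / (2 * K) * K by apply Rmult_le_compat_r; lra.
      lra. }
    have [u [Hu Hu2]] : exists u, E u /\ m - eta < u.
    { apply NNPP => Hn.
      have : m <= m - eta.
      { apply Hlub => u Hu. apply Rnot_lt_le => Hlt. apply Hn. by exists u. }
      lra. }
    have Hum : u <= m by apply Hub.
    case: (Rle_lt_or_eq_dec u m Hum) => Hum'; last first.
    { rewrite Hum' in Hu. case: Hu => _ Hu. lra. }
    have := Hlip (m - u) ltac:(lra).
    have -> : m - (m - u) = u by ring.
    case: Hu => _ HuB.
    move=> Habs. have H3 := Rle_abs (-(l u e - l m e)). rewrite Rabs_Ropp in H3.
    have : (m - u) * K <= eta * K by apply Rmult_le_compat_r; lra.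
    rewrite -/K in Habs. lra. }
  have Hmt' : m < t.
  { case: (Rle_lt_or_eq_dec m t Hmt) => // Heq. rewrite Heq in HmB. lra. }
  have Hafter : forall u, m < u <= t -> B < l u e.
  { move=> u Hu. apply Rnot_le_lt => HuB.
    have : u <= m by apply Hub; split; lra.
    lra. }
  have [d Hrdm] : exists d, right_deriv (fun s => l s e) m d.
  { case: (Rle_lt_or_eq_dec 0 m Hm0) => Hm0'.
    - eexists. apply: dpl_rd. exact (Hder m e Hm0').
    - rewrite -Hm0'. eexists. exact (Hrd e). }
  have [del [Hdel Hlip]] := @rd_lip _ _ _ Hrdm.
  set K := Rabs d + 1.
  have HK : 0 < K by rewrite /K; have := Rabs_pos d; lra.
  set h := Rmin (del / 2) (Rmin ((t - m) / 2) ((l t e - B) / (2 * K))).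
  have Hh1 : h <= del / 2 by apply Rmin_l.
  have Hh2 : h <= (t - m) / 2.
  { apply (Rle_trans _ _ _ (Rmin_r _ _)). apply Rmin_l. }
  have Hh3 : h <= (l t e - B) / (2 * K).
  { apply (Rle_trans _ _ _ (Rmin_r _ _)). apply Rmin_r. }
  have Hh0 : 0 < h.
  { apply Rmin_glb_lt; [lra|]. apply Rmin_glb_lt; apply Rdiv_lt_0_compat; lra. }
  have HhK : h * K <= (l t e - B) / 2.
  { have : (l t e - B) / (2 * K) * K = (l t e - B) / 2 by field; lra.
    have : h * K <= (l t e - B) / (2 * K) * K by apply Rmult_le_compat_r; lra.
    lra. }
  have Hs' : l (m + h) e < l t e.
  { have Habs := Hlip h ltac:(lra). rewrite -/K in Habs.
    have H3 := Rle_abs (l (m + h) e - l m e).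
    have : h * K <= (l t e - B) / 2 by exact HhK.
    lra. }
  have Hlt : m + h < t by lra.
  have [xi [Hmvt Hxi]] := MVT_cor2 (fun s => l s e) (fun s => curv (l s) e * l s e) (m + h) t Hlt
     ltac:(move=> c Hc; apply Hder; lra).
  have Hc := Hneg xi ltac:(lra) (Hafter xi ltac:(lra)).
  have Hp := Hpos xi e ltac:(lra).
  have : curv (l xi) e * l xi e * (t - (m + h)) < 0.
  { apply Rmult_neg_pos; [|lra]. apply Rmult_neg_pos; lra. }
  simpl in Hmvt. lra.
Qed.
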